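(* Fix $-1 \leq a < 1$ and let $\mathfrak{g} = \mathfrak{r}_{3,a}$, the three-dimensional Lie algebra with basis $\{e_1,e_2,e_3\}$ and nonzero brackets $[e_1,e_2]=e_2$, $[e_1,e_3]=ae_3$. For every inner product $\langle\cdot,\cdot\rangle$ on $\mathfrak{g}$, there exist $\lambda \in \mathbb{R}$, $k > 0$, and an orthonormal basis $\{x_1, x_2, x_3\}$ with respect to $k \langle\cdot,\cdot\rangle$ such that the bracket relations are given by \[ [x_1 , x_2] = x_2 + \lambda (a-1)x_3 , \quad [x_1 , x_3] = a x_3 \] (and $[x_2,x_3]=0$). Furthermore, the matrix expression of the derivation algebra $\mathrm{Der}(\mathfrak{g})$ with respect to $\{x_1, x_2, x_3\}$ coincides with \[ \left\{ \begin{pmatrix} 0 & 0 & 0 \\ x_{21} & x_{22} & 0 \\ x_{31} & \lambda (x_{33} - x_{22}) & x_{33} \end{pmatrix} \;\middle|\; x_{21}, x_{22}, x_{31}, x_{33} \in \mathbb{R} \right\}. \] *)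

(* Defs.v *)
(* g = r_{3,a} realized on row vectors 'rV[R]_3 with
   standard basis e_1,e_2,e_3 = delta_mx 0 0, delta_mx 0 1, delta_mx 0 2. *)
From HB Require Import structures.
From mathcomp Require Import all_boot all_order all_algebra.
Set Implicit Arguments. Unset Strict Implicit. Unset Printing Implicit Defensive.
Import Order.TTheory GRing.Theory Num.Theory.
Local Open Scope ring_scope.

(* bilinear extension of [e1,e2]=e2, [e1,e3]=a e3, [e2,e3]=0 *)
Definition r3a_bracket (R : pzRingType) (a : R) (u v : 'rV[R]_3) : 'rV[R]_3 :=
  (u 0 0 * v 0 1 - u 0 1 * v 0 0) *: (delta_mx 0 1 : 'rV[R]_3)
  + (a * (u 0 0 * v 0 2 - u 0 2 * v 0 0)) *: (delta_mx 0 2 : 'rV[R]_3).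

Definition is_inner_product (R : rcfType) (S : 'M[R]_3) : Prop :=
  S^T = S /\ (forall v : 'rV[R]_3, v != 0 -> 0 < (v *m S *m v^T) 0 0).

Definition ip (R : pzRingType) (S : 'M[R]_3) (u v : 'rV[R]_3) : R :=
  (u *m S *m v^T) 0 0.

Definition is_derivation (R : pzRingType) (a : R) (D : 'M[R]_3) : Prop :=
  forall u v : 'rV[R]_3,
    r3a_bracket a u v *m D = r3a_bracket a (u *m D) v + r3a_bracket a u (v *m D).

(* M is the matrix of D w.r.t. basis x (columns = images): D x_j = sum_i M_ij x_i *)
Definition matrix_wrt (R : pzRingType) (x : 'I_3 -> 'rV[R]_3) (D M : 'M[R]_3) : Prop :=
  forall j : 'I_3, x j *m D = \sum_(i < 3) M i j *: x i.

Definition der_form (R : pzRingType) (lam x21 x22 x31 x33 : R) : 'M[R]_3 :=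
  \matrix_(i < 3, j < 3)
    match nat_of_ord i, nat_of_ord j with
    | 1%N, 0%N => x21
    | 1%N, 1%N => x22
    | 2%N, 0%N => x31
    | 2%N, 1%N => lam * (x33 - x22)
    | 2%N, 2%N => x33
    | _, _ => 0
    end.

(* Main.v *)
Require Import Defs.
From HB Require Import structures.
From mathcomp Require Import all_boot all_order all_algebra.
From mathcomp Require Import ring lra.
Import Order.TTheory GRing.Theory Num.Theory.
Local Open Scope ring_scope.

Lemma sum3 (R : nmodType) (F : 'I_3 -> R) : \sum_(i < 3) F i = F 0 + F 1 + F 2.
Proof. rewrite !big_ord_recr big_ord0 /= add0r. do 3 f_equal; exact: val_inj. Qed.

Lemma ord3 (P : 'I_3 -> Prop) : P 0 -> P 1 -> P 2 -> forall j, P j.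
Proof.
move=> p0 p1 p2 [[|[|[|?]]] hj] //.
- by have -> : Ordinal hj = 0 by exact: val_inj.
- by have -> : Ordinal hj = 1 by exact: val_inj.
- by have -> : Ordinal hj = 2 by exact: val_inj.
Qed.

Section Gen.
Variables (R : rcfType) (a : R) (x : 'I_3 -> 'rV[R]_3).
Hypotheses (ha : a != 1) (h00 : x 0 0 0 = 1) (h10 : x 1 0 0 = 0) (h20 : x 2 0 0 = 0)
  (h21 : x 2 0 1 = 0) (hal : x 1 0 1 != 0) (hga : x 2 0 2 != 0).

Let lam := x 1 0 2 / x 2 0 2.

Lemma brk01 : r3a_bracket a (x 0) (x 1) = x 1 + (lam * (a - 1)) *: x 2.
Proof.
apply/rowP; apply: ord3; rewrite /r3a_bracket !mxE /lam /= ?h00 ?h10 ?h20 ?h21; try field; auto.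
Qed.
Lemma brk02 : r3a_bracket a (x 0) (x 2) = a *: x 2.
Proof.
apply/rowP; apply: ord3; rewrite /r3a_bracket !mxE /= ?h00 ?h10 ?h20 ?h21; ring.
Qed.
Lemma brk12 : r3a_bracket a (x 1) (x 2) = 0.
Proof.
apply/rowP; apply: ord3; rewrite /r3a_bracket !mxE /= ?h00 ?h10 ?h20 ?h21; ring.
Qed.

Lemma derE (D : 'M[R]_3) (i j k : 'I_3) : is_derivation a D ->
  (r3a_bracket a (delta_mx 0 i) (delta_mx 0 j) *m D) 0 k =
  (r3a_bracket a (delta_mx 0 i *m D) (delta_mx 0 j)
   + r3a_bracket a (delta_mx 0 i) (delta_mx 0 j *m D)) 0 k.
Proof. by move=> h; rewrite h. Qed.

Lemma der_imp (D M : 'M[R]_3) : is_derivation a D -> matrix_wrt x D M ->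
  exists x21 x22 x31 x33 : R, M = der_form lam x21 x22 x31 x33.
Proof.
move=> hD hM.
have e1 := derE D 0 1 0 hD.
have e2 := derE D 0 1 1 hD.
have e3 := derE D 0 1 2 hD.
have e4 := derE D 0 2 1 hD.
have e5 := derE D 1 2 1 hD.
rewrite /r3a_bracket !mxE !sum3 !mxE /= in e1 e2 e3 e4 e5.
rewrite !(mul0r,mulr0,mul1r,mulr1,add0r,addr0,subr0,sub0r) in e1 e2 e3 e4 e5.
have d10 : D 1 0 = 0 by lra.
have d00 : D 0 0 = 0 by lra.
have d12 : D 1 2 = 0.
  apply: (mulIf (_ : 1 - a != 0)); first by rewrite subr_eq0 eq_sym.
  rewrite mul0r; lra.
have d21 : D 2 1 = 0.
  apply: (mulIf (_ : 1 - a != 0)); first by rewrite subr_eq0 eq_sym.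
  rewrite mul0r; lra.
have d20 : D 2 0 = 0 by lra.
have hm (j k : 'I_3) : \sum_(i < 3) x j 0 i * D i k = \sum_(i < 3) M i j * x i 0 k.
  have : (x j *m D) 0 k = (\sum_(i<3) M i j *: x i) 0 k by rewrite hM.
  rewrite mxE summxE => ->.
  by apply: eq_bigr => i _; rewrite mxE.
have m00 := hm 0 0; have m01 := hm 1 0; have m02 := hm 2 0.
have m21 := hm 2 1; have m11 := hm 1 1; have m22 := hm 2 2; have m12 := hm 1 2.
rewrite !sum3 ?d00 ?d10 ?d20 ?d12 ?d21 ?h00 ?h10 ?h20 ?h21 in m00 m01 m02 m21 m11 m22 m12.
rewrite !(mul0r,mulr0,mul1r,mulr1,add0r,addr0,subr0,sub0r) in m00 m01 m02 m21 m11 m22 m12.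
rewrite -m01 -m02 !mul0r !add0r in m21 m11 m22 m12.
have M12 : M 1 2 = 0 by apply: (mulIf hal); rewrite mul0r.
rewrite M12 mul0r add0r in m22.
have M11 : M 1 1 = D 1 1 by apply: (mulIf hal); rewrite -m11 mulrC.
have M22 : M 2 2 = D 2 2 by apply: (mulIf hga); rewrite -m22 mulrC.
have M21 : M 2 1 = lam * (M 2 2 - M 1 1).
  apply: (mulIf hga); rewrite /lam M11 M22.
  have -> : M 2 1 * x 2 0 2 = x 1 0 2 * D 2 2 - M 1 1 * x 1 0 2 by rewrite m12; ring.
  rewrite M11; field; exact: hga.
exists (M 1 0), (M 1 1), (M 2 0), (M 2 2).
apply/matrixP; apply: ord3; apply: ord3; rewrite mxE /= //.
Qed.

Definition Dmat (A B C E p q al be ga : R) : 'M[R]_3 :=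
  \matrix_(i < 3, j < 3)
    match nat_of_ord i, nat_of_ord j with
    | 0%N, 1%N => A * al - p * B
    | 0%N, 2%N => A * be + C * ga - q * E
    | 1%N, 1%N => B
    | 2%N, 2%N => E
    | _, _ => 0
    end.

Lemma der_rev A B C E :
  exists D, is_derivation a D /\ matrix_wrt x D (der_form lam A B C E).
Proof.
exists (Dmat A B C E (x 0 0 1) (x 0 0 2) (x 1 0 1) (x 1 0 2) (x 2 0 2)); split.
  move=> u v; apply/rowP; apply: ord3;
  rewrite /r3a_bracket !mxE !sum3 !mxE /=; ring.
apply: ord3; apply/rowP; apply: ord3;
rewrite !mxE !summxE !sum3 !mxE /= ?h00 ?h10 ?h20 ?h21 /lam; field.
all: try exact: hga; try done.
Qed.
End Gen.

Section IP.
Variables (R : rcfType) (S : 'M[R]_3).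
Lemma ipDl u v w : ip S (u + v) w = ip S u w + ip S v w.
Proof. by rewrite /ip !mulmxDl mxE. Qed.
Lemma ipBl u v w : ip S (u - v) w = ip S u w - ip S v w.
Proof. by rewrite /ip !mulmxBl !mxE. Qed.
Lemma ipZl c u w : ip S (c *: u) w = c * ip S u w.
Proof. by rewrite /ip -!scalemxAl mxE. Qed.
Lemma ipZr c u w : ip S u (c *: w) = c * ip S u w.
Proof. by rewrite /ip linearZ /= -!scalemxAr mxE. Qed.
Lemma ip_sym u w : S^T = S -> ip S u w = ip S w u.
Proof.
move=> hs; rewrite /ip.
have -> : (u *m S *m w^T) 0 0 = (u *m S *m w^T)^T 0 0 by rewrite [RHS]mxE.
by rewrite !trmx_mul trmxK hs mulmxA.
Qed.
End IP.

Lemma der_iff (R : rcfType) (a : R) (x : 'I_3 -> 'rV[R]_3) :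
  a != 1 -> x 0 0 0 = 1 -> x 1 0 0 = 0 -> x 2 0 0 = 0 -> x 2 0 1 = 0 ->
  x 1 0 1 != 0 -> x 2 0 2 != 0 ->
  forall M : 'M[R]_3,
           (exists D : 'M[R]_3, is_derivation a D /\ matrix_wrt x D M) <->
           (exists x21 x22 x31 x33 : R, M = der_form (x 1 0 2 / x 2 0 2) x21 x22 x31 x33).
Proof.
move=> ha h00 h10 h20 h21 hal hga M; split.
  by move=> [D [hD hM]]; exact: (@der_imp R a x ha h00 h10 h20 h21 hal hga D M hD hM).
by move=> [A [B [C [E ->]]]]; exact: (@der_rev R a x h00 h10 h20 h21 hga A B C E).
Qed.

Theorem proposition4p8 (R : rcfType) (a : R) (ha1 : -1 <= a) (ha2 : a < 1)
  (S : 'M[R]_3) (hS : is_inner_product S) :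
  exists (lam k : R) (x : 'I_3 -> 'rV[R]_3),
    [/\ 0 < k,
        (forall i j : 'I_3, k * ip S (x i) (x j) = (i == j)%:R),
        [/\ r3a_bracket a (x 0) (x 1) = x 1 + (lam * (a - 1)) *: x 2,
            r3a_bracket a (x 0) (x 2) = a *: x 2
          & r3a_bracket a (x 1) (x 2) = 0]
      & (forall M : 'M[R]_3,
           (exists D : 'M[R]_3, is_derivation a D /\ matrix_wrt x D M) <->
           (exists x21 x22 x31 x33 : R, M = der_form lam x21 x22 x31 x33))].
Proof.
have ha : a != 1 by rewrite lt_eqF.
case: hS => hsym hpos.
pose e (i : 'I_3) : 'rV[R]_3 := delta_mx 0 i.
pose w2 := e 2. pose n2 := ip S w2 w2.
have n2p : 0 < n2.
  apply: hpos; apply/eqP => /rowP /(_ 2); rewrite !mxE /= ?mulr1n ?mulr0n.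
  by move/eqP; rewrite oner_eq0.
pose t := ip S (e 1) w2 / n2. pose w1 := e 1 - t *: w2. pose n1 := ip S w1 w1.
have n1p : 0 < n1.
  apply: hpos; apply/eqP => /rowP /(_ 1); rewrite !mxE /= ?mulr1n ?mulr0n mulr0 subr0.
  by move/eqP; rewrite oner_eq0.
pose w0 := e 0 - (ip S (e 0) w1 / n1) *: w1 - (ip S (e 0) w2 / n2) *: w2.
pose n0 := ip S w0 w0.
have n0p : 0 < n0.
  apply: hpos; apply/eqP => /rowP /(_ 0); rewrite !mxE /= ?mulr1n ?mulr0n ?(mulr0, subr0, oppr0, sub0r).
  by move/eqP; rewrite oner_eq0.
pose c1 := Num.sqrt (n0 / n1). pose c2 := Num.sqrt (n0 / n2).
have c1p : 0 < c1 by rewrite sqrtr_gt0 divr_gt0.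
have c2p : 0 < c2 by rewrite sqrtr_gt0 divr_gt0.
have c1s : c1 * c1 = n0 / n1 by rewrite -expr2 sqr_sqrtr // ltW // divr_gt0.
have c2s : c2 * c2 = n0 / n2 by rewrite -expr2 sqr_sqrtr // ltW // divr_gt0.
pose x (i : 'I_3) : 'rV[R]_3 := match nat_of_ord i with 0%N => w0 | 1%N => c1 *: w1 | _ => c2 *: w2 end.
have nz := (lt0r_neq0 n0p, lt0r_neq0 n1p, lt0r_neq0 n2p, lt0r_neq0 c1p, lt0r_neq0 c2p).
have o12 : ip S w1 w2 = 0.
  rewrite ipBl ipZl /t -/n2; field; by rewrite ?nz.
have o01 : ip S w0 w1 = 0.
  rewrite !ipBl !ipZl (@ip_sym _ S w2 w1 hsym) o12 -/n1 -/n2; field; by rewrite ?nz.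
have o02 : ip S w0 w2 = 0.
  rewrite !ipBl !ipZl o12 -/n1 -/n2; field; by rewrite ?nz.
have x000 : x 0 0 0 = 1 by rewrite /x /= !mxE /= ?mulr1n ?mulr0n ?(mulr0, subr0, oppr0, sub0r, mulr1) ?nz.
have x100 : x 1 0 0 = 0 by rewrite /x /= !mxE /= ?mulr1n ?mulr0n ?(mulr0, subr0, oppr0, sub0r, mulr1) ?nz.
have x200 : x 2 0 0 = 0 by rewrite /x /= !mxE /= ?mulr1n ?mulr0n ?(mulr0, subr0, oppr0, sub0r, mulr1) ?nz.
have x201 : x 2 0 1 = 0 by rewrite /x /= !mxE /= ?mulr1n ?mulr0n ?(mulr0, subr0, oppr0, sub0r, mulr1) ?nz.
have x101 : x 1 0 1 != 0 by rewrite /x /= !mxE /= ?mulr1n ?mulr0n ?(mulr0, subr0, oppr0, sub0r, mulr1) ?nz.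
have x202 : x 2 0 2 != 0 by rewrite /x /= !mxE /= ?mulr1n ?mulr0n ?(mulr0, subr0, oppr0, sub0r, mulr1) ?nz.
exists (x 1 0 2 / x 2 0 2), n0^-1, x; split.
- by rewrite invr_gt0.
- apply: ord3; apply: ord3; rewrite /x /= ?ipZl ?ipZr.
  all: rewrite ?o01 ?o02 ?o12 ?(@ip_sym _ S w1 w0 hsym) ?(@ip_sym _ S w2 w0 hsym) ?(@ip_sym _ S w2 w1 hsym) ?o01 ?o02 ?o12 ?mulr0 //.
  all: try (try rewrite -/n0; try rewrite -/n1; try rewrite -/n2; rewrite ?[c1 * (c1 * _)]mulrA ?[c2 * (c2 * _)]mulrA ?c1s ?c2s; field; by rewrite ?nz).
- split.
  + by apply: brk01.
  + by apply: brk02.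
  + by apply: brk12.
- exact: (@der_iff R a x ha x000 x100 x200 x201 x101 x202).
Qed.
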